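(* Let $n\ge 2$, $m\ge 1$ and $j\ge 1$ be integers, and for $y>0$ let $D_{m+1}(y)$ be the determinant of the $(m+1)\times(m+1)$ Hankel matrix whose $(i,k)$ entry, for $0\le i,k\le m$, is $\psi_2^{(n+(i+k)j)}(y)$. Then $y\mapsto(-1)^{(n+1)(m+1)}D_{m+1}(y)$ is completely monotonic on $(0,\infty)$.
   Context: For an integer $n\ge 2$ and $x>0$, the poly-double gamma function is defined by $$\psi_2^{(n)}(x)=(-1)^{n+1}\,n!\sum_{k=0}^{\infty}\frac{1+k}{(x+k)^{n+1}} .$$ A real-valued $C^\infty$ function $f$ on $(0,\infty)$ is called completely monotonic if $(-1)^k f^{(k)}(x)\ge 0$ for all integers $k\ge 0$ and all $x>0$. *)

(* Defs.v *)
From Stdlib Require Import Reals.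
From Coquelicot Require Import Coquelicot.
From mathcomp Require Import all_boot all_algebra.
From mathcomp Require Import Rstruct.

Open Scope R_scope.

Definition psi2 (n : nat) (x : R) : R :=
  (-1) ^ (n + 1) * INR (Stdlib.Arith.Factorial.fact n) *
  Series (fun k : nat => (1 + INR k) / (x + INR k) ^ (n + 1)).

Definition hankel_psi2 (n m j : nat) (y : R) : 'M[R]_(m.+1) :=
  \matrix_(i < m.+1, k < m.+1) psi2 (n + (i + k) * j)%N y.

Definition D_hankel (n m j : nat) (y : R) : R := (\det (hankel_psi2 n m j y))%R.

Definition completely_monotonic (f : R -> R) : Prop :=
  forall (k : nat) (x : R), 0 < x ->
    ex_derive_n f k x /\ 0 <= (-1) ^ k * Derive_n f k x.

(* Main.v *)
Require Import Defs.
From Stdlib Require Import Reals Lra Lia Psatz Ranalysis5 FunctionalExtensionality.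
From Coquelicot Require Import Coquelicot.
From mathcomp Require Import all_boot all_algebra all_fingroup.
From mathcomp Require Import Rstruct zify.
From mathcomp Require ring.
Open Scope R_scope.

Definition tm (p : nat) (y : R) (k : nat) : R := (1 + INR k) / (y + INR k) ^ p.
Definition tel (k : nat) : R := / ((INR k + 1) * (INR k + 2)).

Lemma tel_series : ex_series tel.
Proof.
exists 1. change (is_lim_seq (sum_n tel) 1).
apply (is_lim_seq_ext (fun N => 1 - / (INR N + 2))).
- intro N. induction N as [|N IH].
  + rewrite sum_O. unfold tel. simpl. field.
  + rewrite sum_Sn. change (plus (sum_n tel N) (tel (S N))) with (sum_n tel N + tel (S N)). rewrite -IH. unfold tel. rewrite S_INR. field.
    pose proof (pos_INR N). lra.
- replace (Rbar.Finite 1) with (Rbar.Finite (1 - 0)) by (f_equal; ring).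
  apply is_lim_seq_minus'. apply is_lim_seq_const.
  replace (Rbar.Finite 0) with (Rbar_inv p_infty) by reflexivity.
  apply is_lim_seq_inv; [|discriminate].
  apply (is_lim_seq_ext (fun n => INR (n + 2))).
  { intro n. rewrite plus_INR. simpl. ring. }
  apply (is_lim_seq_incr_n INR 2 p_infty). apply is_lim_seq_INR.

Qed.

Lemma tm_nonneg p y k : 0 < y -> 0 <= tm p y k.
Proof.
intro Hy. unfold tm. pose proof (pos_INR k).
apply Rmult_le_pos. lra. apply Rlt_le, Rinv_0_lt_compat, pow_lt. lra.
Qed.

Lemma tm_bound p b y k : 0 < b <= 1 -> b <= y -> (3 <= p)%nat ->
  tm p y k <= 2 / b ^ p * tel k.
Proof.
intros Hb Hby Hp. unfold tm, tel. pose proof (pos_INR k) as HK.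
set (K := INR k) in *.
assert (h1 : 0 <= b * (1 + K) <= y + K) by nra.
assert (h2 : (b * (1 + K)) ^ p <= (y + K) ^ p) by (apply pow_incr; lra).
assert (h3 : (1 + K) ^ 3 <= (1 + K) ^ p) by (apply Rle_pow; lra || lia).
rewrite Rpow_mult_distr in h2.
assert (hb : 0 < b ^ p) by (apply pow_lt; lra).
assert (hZ : 0 < b ^ p * (1 + K) ^ 3) by (apply Rmult_lt_0_compat; [lra| apply pow_lt; lra]).
assert (hZ2 : b ^ p * (1 + K) ^ 3 <= (y + K) ^ p).
{ apply Rle_trans with (b ^ p * (1 + K) ^ p); [apply Rmult_le_compat_l; lra | lra]. }
apply Rle_trans with ((1 + K) / (b ^ p * (1 + K) ^ 3)).
{ unfold Rdiv. apply Rmult_le_compat_l. lra. apply Rinv_le_contravar; lra. }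
replace ((1 + K) / (b ^ p * (1 + K) ^ 3)) with (/ (b ^ p * (1 + K) ^ 2)) by (field; lra).
replace (2 / b ^ p * / ((K + 1) * (K + 2))) with (/ (b ^ p * ((K + 1) * (K + 2)) / 2)) by (field; lra).
apply Rinv_le_contravar.
- apply Rmult_lt_0_compat; [apply Rmult_lt_0_compat; [lra|nra]|lra].
- simpl. nra.
Qed.

Lemma tm_series p y : 0 < y -> (3 <= p)%nat -> ex_series (tm p y).
Proof.
intros Hy Hp. set (b := Rmin y 1).
assert (Hb : 0 < b <= 1) by (unfold b; apply Rmin_case_strong; intros; lra).
assert (Hby : b <= y) by (unfold b; apply Rmin_l).
apply (@ex_series_le R_AbsRing R_CompleteNormedModule _ (fun k => 2 / b ^ p * tel k)).
- intro k. change (Rabs (tm p y k) <= 2 / b ^ p * tel k).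
  assert (H0 := tm_nonneg p y k Hy). rewrite (Rabs_pos_eq _ H0). apply tm_bound; auto.
- apply (@ex_series_scal_l R_AbsRing R_NormedModule (2 / b ^ p)). apply tel_series.
Qed.

Lemma tm_deriv p y k : 0 < y -> is_derive (fun z => tm p z k) y (- INR p * tm (S p) y k).
Proof.
intro Hy. pose proof (pos_INR k). unfold tm.
auto_derive.
- apply pow_nonzero. lra.
- destruct p as [|p]; simpl; [field; lra|]. field. split; [apply pow_nonzero; lra| lra].
Qed.

Lemma psum_deriv p y N : 0 < y ->
  is_derive (fun z => sum_f_R0 (tm p z) N) y (- INR p * sum_f_R0 (tm (S p) y) N).
Proof.
intro Hy. induction N as [|N IH]; simpl.
- apply tm_deriv; auto.
- replace (- INR p * (sum_f_R0 (tm (S p) y) N + tm (S p) y (S N))) with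
    (- INR p * sum_f_R0 (tm (S p) y) N + - INR p * tm (S p) y (S N)) by ring.
  apply (is_derive_plus (fun z => sum_f_R0 (tm p z) N) (fun z => tm p z (S N))); auto.
  apply tm_deriv; auto.
Qed.

Lemma tm_un_cv p y : 0 < y -> (3 <= p)%nat -> Un_cv (fun N => sum_f_R0 (tm p y) N) (Series (tm p y)).
Proof.
intros Hy Hp. pose proof (Series_correct _ (tm_series p y Hy Hp)) as H.
apply is_series_Reals in H. exact H.
Qed.

Lemma S_deriv p x : 0 < x -> (3 <= p)%nat ->
  is_derive (fun y => Series (tm p y)) x (- INR p * Series (tm (S p) x)).
Proof.
intros Hx Hp. apply is_derive_Reals.
assert (Hr : 0 < x / 2) by lra.
set (r := mkposreal (x / 2) Hr).
assert (Hball : forall y, Boule x r y -> x / 2 < y).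
{ intros y Hy. unfold Boule in Hy. simpl in Hy. apply Rabs_def2 in Hy. lra. }
assert (HCVU : CVU (fun N z => - INR p * sum_f_R0 (tm (S p) z) N)
                   (fun z => - INR p * Series (tm (S p) z)) x r).
{ intros eps Heps.
  set (b := Rmin (x / 2) 1).
  assert (Hb : 0 < b <= 1) by (unfold b; apply Rmin_case_strong; intros; lra).
  set (B := fun k => 2 / b ^ (S p) * tel k).
  assert (HB : ex_series B) by (apply (@ex_series_scal_l R_AbsRing R_NormedModule); apply tel_series).
  pose proof (Series_correct _ HB) as HB'. apply is_series_Reals in HB'.
  pose proof (pos_INR p) as HP.
  assert (He : 0 < eps / (INR p + 1)) by (apply Rdiv_lt_0_compat; lra).
  destruct (HB' _ He) as [N HN].
  exists N. intros n y Hn Hy.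
  assert (Hy' : x / 2 < y) by (apply Hball; auto).
  assert (Hbt : forall k, 0 <= tm (S p) y k <= B k).
  { intro k. split. apply tm_nonneg; lra. apply tm_bound; auto.
    unfold b; apply Rle_trans with (x/2). apply Rmin_l. lra. }
  assert (Hs : ex_series (tm (S p) y)) by (apply tm_series; lia || lra).
  rewrite (Series_incr_n (tm (S p) y) (S n) (Nat.lt_0_succ n) Hs). simpl Nat.pred.
  pose proof (HN n Hn) as HNn. unfold Rdist in HNn.
  rewrite (Series_incr_n B (S n) (Nat.lt_0_succ n) HB) in HNn. simpl Nat.pred in HNn.
  assert (Hle : Series (fun k => tm (S p) y (Nat.add (S n) k)) <= Series (fun k => B (Nat.add (S n) k))).
  { apply Series_le. intro k. apply Hbt. apply (ex_series_incr_n B (S n)). auto. }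
  assert (Hge : 0 <= Series (fun k => tm (S p) y (Nat.add (S n) k))).
  { apply Rle_trans with (Series (fun k : nat => 0 * tel k)).
    - rewrite Series_scal_l. lra.
    - apply Series_le. intro k. split. lra. rewrite Rmult_0_l. apply tm_nonneg; lra. apply (proj1 (ex_series_incr_n (tm (S p) y) (S n))). exact Hs. }
  set (T := Series (fun k => tm (S p) y (Nat.add (S n) k))) in *.
  set (U := Series (fun k => B (Nat.add (S n) k))) in *.
  replace (sum_f_R0 B n - (sum_f_R0 B n + U)) with (- U) in HNn by ring.
  assert (HU : 0 <= U) by lra. rewrite Rabs_Ropp (Rabs_pos_eq _ HU) in HNn.
  replace (- INR p * (sum_f_R0 (tm (S p) y) n + T) - - INR p * sum_f_R0 (tm (S p) y) n)
    with (- (INR p * T)) by ring.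
  assert (HPT : 0 <= INR p * T) by (apply Rmult_le_pos; lra). rewrite Rabs_Ropp (Rabs_pos_eq _ HPT).
  apply Rle_lt_trans with (INR p * (eps / (INR p + 1))).
  + apply Rmult_le_compat_l; lra.
  + unfold Rdiv. replace (INR p * (eps * / (INR p + 1))) with (eps * (INR p / (INR p + 1))) by (field; lra).
    assert (Hq : INR p / (INR p + 1) < 1).
    { apply (Rmult_lt_reg_r (INR p + 1)); [lra|]. unfold Rdiv. rewrite Rmult_assoc Rinv_l; lra. }
    apply (Rmult_lt_compat_l eps) in Hq; lra. }
apply (derivable_pt_lim_CVU (fun N z => sum_f_R0 (tm p z) N)
        (fun N z => - INR p * sum_f_R0 (tm (S p) z) N)
        (fun y => Series (tm p y)) (fun z => - INR p * Series (tm (S p) z)) x x r).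
- apply Boule_center.
- intros y n Hy. apply is_derive_Reals. apply psum_deriv. pose proof (Hball y Hy). lra.
- intros y Hy. apply tm_un_cv; [pose proof (Hball y Hy); lra | lia].
- exact HCVU.
- apply (CVU_continuity _ _ x r HCVU).
  intros n y Hy. apply derivable_continuous_pt.
  exists (- INR p * (- INR (S p) * sum_f_R0 (tm (S (S p)) y) n)).
  apply is_derive_Reals.
  apply (is_derive_scal (fun z => sum_f_R0 (tm (S p) z) n)).
  apply psum_deriv. pose proof (Hball y Hy). lra.
Qed.

Definition Mf (q : nat) (y : R) : R := INR (Factorial.fact q) * Series (tm (q + 1) y).

Lemma psi2_Mf q y : psi2 q y = (-1) ^ (q + 1) * Mf q y.
Proof. unfold psi2, Mf, tm. ring. Qed.

Lemma Mf_deriv q x : 0 < x -> (2 <= q)%nat -> is_derive (Mf q) x (- Mf (S q) x).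
Proof.
intros Hx Hq. unfold Mf.
replace (- (INR (Factorial.fact (S q)) * Series (tm (S q + 1) x))) with
  (INR (Factorial.fact q) * (- INR (q + 1) * Series (tm (S (q + 1)) x))).
- apply (is_derive_scal (fun y => Series (tm (q + 1) y))). apply S_deriv; [lra | lia].
- replace (S q + 1)%nat with (S (q + 1)) by lia.
  rewrite Rfunctions.fact_simpl mult_INR plus_INR !S_INR INR_0. ring.
Qed.

Lemma term_id (a K1 x1 x2 x3 : R) (e A B : nat) : 0 < a ->
  x1 * x2 * x3 * (K1 / a ^ (A + B + e + 1)) = (K1 * x1 / a ^ (e + 1)) * (x2 / a ^ A) * (x3 / a ^ B).
Proof.
intro Ha.
replace (A + B + e + 1)%nat with ((e + 1) + A + B)%nat by lia.
rewrite !pow_add.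
assert (a ^ e <> 0) by (apply pow_nonzero; lra).
assert (a ^ A <> 0) by (apply pow_nonzero; lra).
assert (a ^ B <> 0) by (apply pow_nonzero; lra).
field. lra.
Qed.

Lemma sign_sq k : (-1) ^ k * (-1) ^ k = 1.
Proof. rewrite <- Rpow_mult_distr. replace (-1 * -1) with 1 by ring. apply pow1. Qed.

Lemma term_id2 (a K1 : R) (N1 N2 N3 e A B : nat) : 0 < a ->
  INR (N1 * N2 * N3) * (K1 / a ^ (A + B + e + 1)) =
  (K1 * INR N1 / a ^ (e + 1)) * (INR N2 / a ^ A) * (INR N3 / a ^ B).
Proof.
intro Ha. rewrite -term_id //. rewrite !INRE !GRing.natrM. by [].
Qed.

Module Alg.
Import ring.
Import GRing.Theory Num.Theory.
Local Open Scope nat_scope.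

Lemma vand_gen X Y e L : Y < L ->
  \sum_(u < L) 'C(X, u) * 'C(Y + e, u + e) = 'C(X + (Y + e), Y).
Proof.
move=> hYL.
rewrite -(binomial.Vandermonde X (Y + e) Y).
rewrite -(big_mkord xpredT (fun u => 'C(X, u) * 'C(Y + e, u + e))).
rewrite (big_cat_nat _ (n := Y.+1)) //=.
rewrite [X in _ + X = _]big1_seq ?addn0; last first.
  move=> i /andP [_]; rewrite mem_index_iota => /andP [hi _].
  by rewrite (bin_small (n := Y + e)) ?muln0 //; lia.
rewrite big_mkord; apply: eq_bigr => u _.
have hu : u <= Y by rewrite -ltnS.
by rewrite -(bin_sub (n := Y + e) (m := u + e)) ?leq_add2r // subnDr.
Qed.

Lemma fact_gram A B e L : e <= 1 -> B < L ->
  (A + B + e)`! = \sum_(u < L) (u.+1) ^ e * (A`! * 'C(A + e, u + e)) * (B`! * 'C(B + e, u + e)).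
Proof.
move=> he hBL.
have -> : \sum_(u < L) (u.+1) ^ e * (A`! * 'C(A + e, u + e)) * (B`! * 'C(B + e, u + e))
        = (A + e)`! * B`! * \sum_(u < L) 'C(A, u) * 'C(B + e, u + e).
  rewrite big_distrr; apply: eq_bigr => u _ /=.
  case: e he => [|[|//]] _ /=.
  - rewrite !addn0 expn0 mul1n. ring.
  - rewrite expn1 !addn1 factS.
    have h := mul_bin_diag A.+1 u; rewrite /= in h.
    transitivity (A`! * B`! * (u.+1 * 'C(A.+1, u.+1)) * 'C(B.+1, u.+1)); first by ring.
    rewrite -h. ring.
rewrite vand_gen //.
have hB : B <= A + (B + e) by lia.
have := bin_fact hB.
have -> : A + (B + e) - B = A + e by lia.
have -> : A + (B + e) = A + B + e by lia.
move=> <-. ring.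
Qed.


Local Open Scope ring_scope.

Lemma mixed_eq (N : nat) (F : 'I_N -> 'I_N -> 'I_N -> R) :
  \sum_(pi : 'S_N) \sum_(s : 'S_N) (-1) ^+ s * \prod_(i < N) F (pi i) i (s i)
  = \sum_(a : 'S_N) \sum_(b : 'S_N) (-1) ^+ a * (-1) ^+ b * \prod_(r < N) F r (a r) (b r).
Proof.
rewrite [RHS](reindex_inj invg_inj) /=. apply: eq_bigr => pi _.
rewrite [RHS](reindex_inj (mulgI pi^-1)%g) /=. apply: eq_bigr => s _.
rewrite odd_permM signr_addb odd_permV signrMK.
congr (_ * _).
rewrite [LHS](reindex_inj (@perm_inj _ pi^-1%g)) /=.
apply: eq_bigr => r _. by rewrite permKV permM.
Qed.

Lemma mixed_nonneg (N : nat) (P : finType) (w : 'I_N -> P -> R) (g : 'I_N -> P -> 'I_N -> R) :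
  (forall r p, 0 <= w r p) ->
  0 <= \sum_(pi : 'S_N) \sum_(s : 'S_N) (-1) ^+ s *
        \prod_(i < N) (\sum_(p : P) w (pi i) p * g (pi i) p i * g (pi i) p (s i)).
Proof.
move=> hw.
rewrite (@mixed_eq N (fun r s t => \sum_(p : P) w r p * g r p s * g r p t)).
have -> : \sum_(a : 'S_N) \sum_(b : 'S_N) (-1) ^+ a * (-1) ^+ b *
     \prod_(r < N) (\sum_(p : P) w r p * g r p (a r) * g r p (b r))
   = \sum_(f : {ffun 'I_N -> P}) (\prod_(r < N) w r (f r)) *
       (\sum_(a : 'S_N) (-1) ^+ a * \prod_(r < N) g r (f r) (a r)) *
       (\sum_(b : 'S_N) (-1) ^+ b * \prod_(r < N) g r (f r) (b r)).
  under eq_bigr => a _ do under eq_bigr => b _ do rewrite bigA_distr_bigA mulr_sumr.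
  under eq_bigr => a _ do rewrite exchange_big.
  rewrite exchange_big. apply: eq_bigr => f _.
  rewrite mulr_sumr exchange_big /=. apply: eq_bigr => b _.
  rewrite mulr_sumr mulr_suml. apply: eq_bigr => a _.
  rewrite !big_split /=.
  move: (\prod_(i < N) w i (f i)) (\prod_(i < N) g i (f i) (a i)) (\prod_(i < N) g i (f i) (b i)) ((-1) ^+ a : R) ((-1) ^+ b : R) => W Ga Gb sa sb.
  ring.
apply: sumr_ge0 => f _.
rewrite -mulrA. apply: mulr_ge0; first by apply: prodr_ge0 => r _.
rewrite -expr2. exact: sqr_ge0.
Qed.

End Alg.



Lemma one_INR_ge0 k : Rle 0 (Rplus 1 (INR k)).
Proof. have h := pos_INR k. lra. Qed.
Lemma pos_shift y k : Rlt 0 y -> Rlt 0 (Rplus y (INR k)).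
Proof. have h := pos_INR k. lra. Qed.

Lemma lim_nonneg (u : nat -> R) (l : R) : (forall K, Rle 0 (u K)) -> is_lim_seq u l -> Rle 0 l.
Proof.
intros H H1. have H2 := is_lim_seq_le (fun _ => 0) u 0 l H (is_lim_seq_const 0) H1. exact H2.
Qed.

Module Alg2.
Import ring.
Import GRing.Theory Num.Theory.
Import Alg.
Local Open Scope ring_scope.

Lemma is_derive_bigsum (I : Type) (r : seq I) (f : I -> R -> R) (f' : I -> R) (x : R) :
  (forall i, is_derive (f i) x (f' i)) ->
  is_derive (fun y => \sum_(i <- r) f i y) x (\sum_(i <- r) f' i).
Proof.
move=> hf; elim: r => [|h r IH].
- apply: (@is_derive_ext R_AbsRing R_NormedModule (fun _ => 0)); first by move=> t; rewrite big_nil.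
  rewrite big_nil. exact: (is_derive_const (0:R) x).
- apply: (@is_derive_ext R_AbsRing R_NormedModule (fun y => f h y + \sum_(i <- r) f i y)); first by move=> t; rewrite big_cons.
  rewrite big_cons. exact: (is_derive_plus _ _ _ _ _ (hf h) IH).
Qed.

Lemma is_derive_bigprod (I : eqType) (r : seq I) (f : I -> R -> R) (f' : I -> R) (x : R) :
  uniq r -> (forall i, is_derive (f i) x (f' i)) ->
  is_derive (fun y => \prod_(i <- r) f i y) x
    (\sum_(i <- r) \prod_(l <- r) (if l == i then f' l else f l x)).
Proof.
move=> + hf; elim: r => [|h r IH] /=.
- move=> _. apply: (@is_derive_ext R_AbsRing R_NormedModule (fun _ => 1)); first by move=> t; rewrite big_nil.
  rewrite big_nil. exact: (is_derive_const (1:R) x).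
- move=> /andP [hnot hu].
  apply: (@is_derive_ext R_AbsRing R_NormedModule (fun y => f h y * \prod_(i <- r) f i y)); first by move=> t; rewrite big_cons.
  have E : \sum_(i <- h :: r) \prod_(l <- h :: r) (if l == i then f' l else f l x)
     = f' h * \prod_(i <- r) f i x + f h x * \sum_(i <- r) \prod_(l <- r) (if l == i then f' l else f l x).
    rewrite big_cons big_cons eqxx. congr (_ * _ + _).
    + rewrite big_seq_cond [RHS]big_seq_cond. apply: eq_bigr => l /andP [hl _].
      have -> : (l == h) = false by apply/negbTE; apply: contraNneq hnot => <-.
      by [].
    + rewrite mulr_sumr big_seq_cond [RHS]big_seq_cond. apply: eq_bigr => i /andP [hi _].
      rewrite big_cons.
      have -> : (h == i) = false by apply/negbTE; apply: contraNneq hnot => ->.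
      by [].
  rewrite E. exact: (is_derive_mult _ _ _ _ _ (hf h) (IH hu) (fun a b => Rmult_comm a b)).
Qed.

Lemma lim_bigsum (I : Type) (r : seq I) (u : I -> nat -> R) (l : I -> R) :
  (forall i, is_lim_seq (u i) (l i)) ->
  is_lim_seq (fun K => \sum_(i <- r) u i K) (\sum_(i <- r) l i).
Proof.
move=> hu; elim: r => [|h r IH].
- apply: (is_lim_seq_ext (fun _ => 0)); first by move=> t; rewrite big_nil.
  rewrite big_nil. exact: is_lim_seq_const.
- apply: (is_lim_seq_ext (fun K => u h K + \sum_(i <- r) u i K)); first by move=> t; rewrite big_cons.
  rewrite big_cons. exact: (is_lim_seq_plus' _ _ _ _ (hu h) IH).
Qed.

Lemma lim_bigprod (I : Type) (r : seq I) (u : I -> nat -> R) (l : I -> R) :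
  (forall i, is_lim_seq (u i) (l i)) ->
  is_lim_seq (fun K => \prod_(i <- r) u i K) (\prod_(i <- r) l i).
Proof.
move=> hu; elim: r => [|h r IH].
- apply: (is_lim_seq_ext (fun _ => 1)); first by move=> t; rewrite big_nil.
  rewrite big_nil. exact: is_lim_seq_const.
- apply: (is_lim_seq_ext (fun K => u h K * \prod_(i <- r) u i K)); first by move=> t; rewrite big_cons.
  rewrite big_cons. exact: (is_lim_seq_mult' _ _ _ _ (hu h) IH).
Qed.

Section Main.
Variables n m j : nat.

Definition G (a : 'I_m.+1 -> nat) (y : R) : R :=
  \sum_(s : 'S_m.+1) (-1) ^+ s * \prod_(i < m.+1) Mf (n + a i + (i + s i) * j)%N y.

Fixpoint W (k : nat) (g : ('I_m.+1 -> nat) -> R) (a : 'I_m.+1 -> nat) {struct k} : R :=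
  match k with
  | O => g a
  | S k' => \sum_(i < m.+1) W k' g (fun l => (a l + (l == i))%N)
  end.

Lemma W_ext k g h a : (forall b, g b = h b) -> W k g a = W k h a.
Proof.
move=> e; elim: k a => [|k IH] a /=; first exact: e.
by apply: eq_bigr => i _; apply: IH.
Qed.

Lemma W_ge0 k g a : (forall b, 0 <= g b) -> 0 <= W k g a.
Proof.
move=> e; elim: k a => [|k IH] a /=; first exact: e.
by apply: sumr_ge0 => i _; apply: IH.
Qed.

Lemma W_sum (I : finType) k (F : I -> ('I_m.+1 -> nat) -> R) a :
  W k (fun b => \sum_(i : I) F i b) a = \sum_(i : I) W k (F i) a.
Proof.
elim: k a => [|k IH] a //=.
under eq_bigr => i _ do rewrite IH.
exact: exchange_big.
Qed.

Lemma W_opp k g a : W k (fun b => - g b) a = - W k g a.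
Proof.
elim: k a => [|k IH] a //=.
under eq_bigr => i _ do rewrite IH.
by rewrite sumrN.
Qed.

Lemma W_shift k g a c :
  W k (fun b => g (fun l => (b l + c l)%N)) a = W k g (fun l => (a l + c l)%N).
Proof.
elim: k a => [|k IH] a //=.
apply: eq_bigr => i _. rewrite IH. congr (W k g _).
apply: functional_extensionality => l. by rewrite addnAC.
Qed.

Lemma W_perm k g a (p : 'S_m.+1) :
  W k (fun b => g (fun l => b (p l))) a = W k g (fun l => a (p l)).
Proof.
elim: k a => [|k IH] a //=.
under eq_bigr => i _ do rewrite IH.
rewrite (reindex_inj (@perm_inj _ p)) /=.
apply: eq_bigr => i _. congr (W k g _).
apply: functional_extensionality => l. by rewrite (inj_eq (@perm_inj _ p)).
Qed.

Lemma W_deriv k (gg : ('I_m.+1 -> nat) -> R -> R) gg' a x :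
  (forall b, is_derive (gg b) x (gg' b)) ->
  is_derive (fun y => W k (fun b => gg b y) a) x (W k gg' a).
Proof.
move=> hd; elim: k a => [|k IH] a /=; first exact: hd.
by apply: (@is_derive_bigsum _ _ (fun i y => W k (fun b => gg b y) (fun l => (a l + (l == i))%N))) => i; apply: IH.
Qed.

Lemma G_deriv a (x : R) : 0 < x -> (2 <= n)%N ->
  is_derive (G a) x (- \sum_(i < m.+1) G (fun l => (a l + (l == i))%N) x).
Proof.
move=> hx hn. rewrite /G.
have -> : - \sum_(i < m.+1) \sum_(s : 'S_m.+1) (-1) ^+ s *
     \prod_(l < m.+1) Mf (n + (a l + (l == i)) + (l + s l) * j)%N x
   = \sum_(s : 'S_m.+1) (-1) ^+ s * \sum_(i < m.+1) \prod_(l < m.+1)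
     (if l == i then - Mf (n + a l + (l + s l) * j)%N.+1 x else Mf (n + a l + (l + s l) * j)%N x).
  rewrite exchange_big -sumrN /=. apply: eq_bigr => s _.
  rewrite mulr_sumr -sumrN. apply: eq_bigr => i _.
  rewrite -mulrN. congr (_ * _).
  rewrite (bigD1 i) //= [in RHS](bigD1 i) //= !eqxx mulNr. congr (- (_ * _)).
  + congr Mf. change (nat_of_bool true) with 1%N. lia.
  + apply: eq_bigr => l hl. rewrite (negbTE hl) addn0. by [].
apply: (@is_derive_bigsum _ _ (fun (s : 'S_m.+1) y => (-1) ^+ s * \prod_(i < m.+1) Mf (n + a i + (i + s i) * j)%N y)) => s.
apply: (is_derive_scal (fun y => \prod_(i < m.+1) Mf (n + a i + (i + s i) * j)%N y)).
apply: (@is_derive_bigprod _ _ (fun i y => Mf (n + a i + (i + s i) * j)%N y)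
          (fun i => - Mf (n + a i + (i + s i) * j)%N.+1 x)).
- exact: index_enum_uniq.
- move=> i. apply: Mf_deriv; [by apply/RltP | lia].
Qed.

Definition T k y := W k (fun a => G a y) (fun _ => 0%N).

Lemma T_deriv k (x : R) : 0 < x -> (2 <= n)%N -> is_derive (T k) x (- T k.+1 x).
Proof.
move=> hx hn. rewrite /T.
have E : W k (fun a => - \sum_(i < m.+1) G (fun l => (a l + (l == i))%N) x) (fun _ => 0%N)
    = - W k.+1 (fun a => G a x) (fun _ => 0%N).
  rewrite W_opp W_sum /=. congr (- _).
  apply: eq_bigr => i _.
  exact: (W_shift k (fun a => G a x) _ (fun l => nat_of_bool (l == i))).
rewrite -E.
exact: (W_deriv k (fun a y => G a y) (fun a => - \sum_(i < m.+1) G (fun l => (a l + (l == i))%N) x)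
   (fun _ => 0%N) x (fun b => G_deriv b x hx hn)).
Qed.

Lemma prod_pow (I : Type) (r : seq I) (e : I -> nat) :
  \prod_(i <- r) pow (-1) (e i) = pow (-1) (\sum_(i <- r) e i)%N.
Proof.
elim: r => [|h r IH]; first by rewrite !big_nil.
by rewrite !big_cons IH pow_add.
Qed.

Lemma det_reduction y :
  pow (-1) ((n + 1) * (m + 1))%N * D_hankel n m j y = G (fun _ => 0%N) y.
Proof.
rewrite /D_hankel /hankel_psi2 /determinant /G mulr_sumr.
apply: eq_bigr => s _.
under eq_bigr => i _ do rewrite mxE psi2_Mf.
rewrite big_split /= prod_pow.
have -> : (\sum_(i < m.+1) (n + (i + s i) * j + 1))%N
   = ((n + 1) * (m + 1) + (\sum_(i < m.+1) (i * j) + \sum_(i < m.+1) (i * j)))%N.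
  have -> : (\sum_(i < m.+1) (n + (i + s i) * j + 1))%N
      = (\sum_(i < m.+1) ((n + 1) + (i * j + s i * j)))%N.
    by apply: eq_bigr => i _; rewrite mulnDl addnAC.
  rewrite big_split /= sum_nat_const card_ord big_split /=.
  have -> : (\sum_(i < m.+1) (s i * j))%N = (\sum_(i < m.+1) (i * j))%N.
    by rewrite [RHS](reindex_inj (@perm_inj _ s)).
  congr (_ + _). by rewrite mulnC !addn1.
under [X in _ = _ * X]eq_bigr => i _ do rewrite addn0.
rewrite !pow_add.
set A := pow (-1) ((n + 1) * (m + 1))%N.
set X := pow (-1) (\sum_(i < m.+1) i * j)%N.
have hA : A * A = 1 by apply: sign_sq.
have hX : X * X = 1 by apply: sign_sq.
rewrite !RmultE hX mulr1.
move: ((-1) ^+ s : R) (\prod_(i < m.+1) Mf (n + (i + s i) * j)%N y) => S P.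
transitivity ((A * A) * (S * P)); first ring.
by rewrite hA mul1r.
Qed.

Definition MK (K q : nat) (y : R) : R := INR (Factorial.fact q) * \sum_(k < K) tm (q + 1) y k.

Lemma MK_lim q (y : R) : (Rlt 0 y) -> (2 <= q)%N -> is_lim_seq (fun K => MK K q y) (Mf q y).
Proof.
move=> hy hq. apply/is_lim_seq_incr_1.
apply: (is_lim_seq_ext (fun K => INR (Factorial.fact q) * sum_f_R0 (tm (q + 1) y) K)).
  by move=> K; rewrite /MK sum_f_R0E big_mkord.
rewrite /Mf. apply: (is_lim_seq_mult' (fun _ => INR (Factorial.fact q))).
  exact: is_lim_seq_const.
apply/is_lim_seq_Reals. apply: tm_un_cv => //. lia.
Qed.

Definition dd c := ((n + c)./2)%N.
Definition ee c : nat := odd (n + c).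
Definition AA c (s : nat) := (dd c + s * j)%N.
Definition wgt (K L : nat) (y : R) c (p : 'I_K * 'I_L) : R :=
  (1 + INR p.1) * INR ((p.2).+1 ^ ee c) / pow (y + INR p.1) (ee c + 1).
Definition gg (K L : nat) (y : R) c (p : 'I_K * 'I_L) (s : nat) : R :=
  INR ((AA c s)`! * 'C(AA c s + ee c, p.2 + ee c)) / pow (y + INR p.1) (AA c s).
Arguments wgt {K L} y c p.
Arguments gg {K L} y c p s.

Lemma gram K L (y : R) c (s t : nat) : (Rlt 0 y) -> (AA c t < L)%N ->
  MK K (n + c + (s + t) * j) y = \sum_(p : 'I_K * 'I_L) wgt y c p * gg y c p s * gg y c p t.
Proof.
move=> hy hL.
have hq : (n + c + (s + t) * j = AA c s + AA c t + ee c)%N.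
  rewrite /AA /dd /ee. have := odd_double_half (n + c). rewrite -addnn.
  move: (odd (n + c)) ((n + c)./2) => b h. case: b => /= E; lia.
have he : (ee c <= 1)%N by rewrite /ee; case: odd.
rewrite /MK hq factE (fact_gram (AA c s) (AA c t) (ee c) L he hL).
transitivity (\sum_(k < K) \sum_(u < L) wgt y c (k, u) * gg y c (k, u) s * gg y c (k, u) t);
  last by rewrite pair_bigA; apply: eq_bigr => -[k u].
rewrite ?RmultE big_distrr /=. apply: eq_bigr => k _.
rewrite INRE natr_sum mulr_suml. apply: eq_bigr => u _.
rewrite -INRE /tm /wgt /gg /=. apply: term_id2.
have := pos_INR k. lra.
Qed.

Lemma Qpos (b : 'I_m.+1 -> nat) (y : R) : (Rlt 0 y) -> (2 <= n)%N ->
  0 <= \sum_(pi : 'S_m.+1) G (fun l => b (pi l)) y.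
Proof.
move=> hy hn.
set L := ((n + \max_(i < m.+1) b i + m * j).+1)%N.
set QK := fun K => \sum_(pi : 'S_m.+1) \sum_(s : 'S_m.+1) (-1) ^+ s *
   \prod_(i < m.+1) MK K (n + b (pi i) + (i + s i) * j)%N y.
have hK : forall K, 0 <= QK K.
  move=> K.
  have -> : QK K = \sum_(pi : 'S_m.+1) \sum_(s : 'S_m.+1) (-1) ^+ s *
     \prod_(i < m.+1) (\sum_(p : 'I_K * 'I_L) wgt y (b (pi i)) p * gg y (b (pi i)) p i * gg y (b (pi i)) p (s i)).
    apply: eq_bigr => pi _. apply: eq_bigr => s _. congr (_ * _).
    apply: eq_bigr => i _. apply: gram => //.
    rewrite /L /AA /dd.
    have h1 : (b (pi i) <= \max_(i0 < m.+1) b i0)%N by apply: (leq_bigmax (pi i)).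
    have h2 : (s i * j <= m * j)%N by apply: leq_mul; [rewrite -ltnS; exact: ltn_ord | exact: leqnn].
    have h3 : ((n + b (pi i))./2 <= n + b (pi i))%N.
      have := odd_double_half (n + b (pi i)). rewrite -addnn.
      move: (odd (n + b (pi i))) ((n + b (pi i))./2) => bb h. case: bb => /= E; lia.
    move: h1 h2 h3. move: (\max_(i0 < m.+1) b i0)%N (s i * j)%N (m * j)%N ((n + b (pi i))./2)%N (b (pi i)) => M X Y Z B.
    lia.
  apply: (@mixed_nonneg m.+1 _ (fun r p => wgt y (b r) p) (fun r p (s : 'I_m.+1) => gg y (b r) p s)).
  move=> r p. rewrite /wgt. apply/RleP. rewrite /Rdiv. apply: Rmult_le_pos.
  - apply: Rmult_le_pos; [exact: (one_INR_ge0 p.1) | exact: pos_INR].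
  - apply: Rlt_le. apply: Rinv_0_lt_compat. apply: pow_lt. exact: (pos_shift y p.1 hy).
have hlim : is_lim_seq QK (\sum_(pi : 'S_m.+1) G (fun l => b (pi l)) y).
  apply: lim_bigsum => pi. apply: lim_bigsum => s.
  apply: (is_lim_seq_mult' (fun _ => (-1) ^+ s)); first exact: is_lim_seq_const.
  apply: lim_bigprod => i. apply: MK_lim => //. lia.
apply/RleP. apply: (lim_nonneg QK _ _ hlim). move=> K. apply/RleP. exact: hK.
Qed.

Lemma T_nonneg k (x : R) : (Rlt 0 x) -> (2 <= n)%N -> 0 <= T k x.
Proof.
move=> hx hn.
have H : \sum_(pi : 'S_m.+1) T k x = W k (fun b => \sum_(pi : 'S_m.+1) G (fun l => b (pi l)) x) (fun _ => 0%N).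
  rewrite W_sum. apply: eq_bigr => pi _. by rewrite (W_perm k (fun a => G a x)).
have H2 : 0 <= \sum_(pi : 'S_m.+1) T k x by rewrite H; apply: W_ge0 => b; exact: Qpos.
rewrite sumr_const card_Sn in H2.
rewrite -mulr_natl in H2.
move: H2. rewrite pmulr_rge0 //. rewrite ltr0n. exact: fact_gt0.
Qed.

End Main.

End Alg2.

Theorem proposition4p1 (n m j : nat) :
  (2 <= n)%nat -> (1 <= m)%nat -> (1 <= j)%nat ->
  completely_monotonic
    (fun y : R => (-1) ^ ((n + 1) * (m + 1)) * D_hankel n m j y).
Proof.
intros hn hm hj.
set f := fun y : R => (-1) ^ ((n + 1) * (m + 1)) * D_hankel n m j y.
have hf : forall y, f y = Alg2.T n m j 0 y.
  intro y. exact: (Alg2.det_reduction n m j y).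
have claim : forall k x, 0 < x ->
    ex_derive_n f k x /\ Derive_n f k x = (-1) ^ k * Alg2.T n m j k x.
  elim=> [|k IH] x hx.
  - split; first exact I. simpl. rewrite hf. ring.
  - have loc : locally x (fun t => (-1) ^ k * Alg2.T n m j k t = Derive_n f k t).
      exists (mkposreal x hx). intros t ht.
      have ht' : Rabs (t - x) < x := ht.
      apply Rabs_def2 in ht'. symmetry. apply IH. lra.
    have hd : is_derive (fun t => (-1) ^ k * Alg2.T n m j k t) x ((-1) ^ k * (- Alg2.T n m j (S k) x)).
      apply: is_derive_scal. apply: Alg2.T_deriv => //. exact/RltP.
    split.
    + simpl. apply: (ex_derive_ext_loc _ _ _ loc). eexists. exact hd.
    + simpl. rewrite -(Derive_ext_loc _ _ _ loc). rewrite (is_derive_unique _ _ _ hd). simpl. ring.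
intros k x hx. destruct (claim k x hx) as [h1 h2]. split; first exact h1.
rewrite h2 -Rmult_assoc sign_sq Rmult_1_l.
apply/RleP. exact: Alg2.T_nonneg.
Qed.
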